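(* Let $G$ be a simple, undirected, connected graph on $N$ vertices with edge set $E$ and degree sequence $d_1\le d_2\le\cdots\le d_N$. If $d_j=1$ for $1\le j\le M$, where $M<N$, then $$R^+(G)\ge N(N-2)+2|E|\left[M+\frac{(N-M)^2}{2|E|-M}\right]-2|E|.$$
   Context: For vertices $i,j$ of $G$, $R_{ij}$ denotes the effective resistance between $i$ and $j$ when every edge of $G$ is a unit resistor. The additive degree-Kirchhoff index is $R^+(G)=\sum_{i<j}(d_i+d_j)R_{ij}$, where $d_i$ is the degree of vertex $i$. *)

(* Defs.v *)
From HB Require Import structures.
From mathcomp Require Import all_boot all_order all_algebra.
Set Implicit Arguments. Unset Strict Implicit. Unset Printing Implicit Defensive.
Import Order.TTheory GRing.Theory Num.Theory.
Local Open Scope ring_scope.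

Definition simple_graph N (e : rel 'I_N) : Prop :=
  irreflexive e /\ symmetric e.

Definition connected_graph N (e : rel 'I_N) : Prop :=
  forall i j : 'I_N, connect e i j.

Definition deg N (e : rel 'I_N) (i : 'I_N) : nat := #|[set j | e i j]|.

Definition edges N (e : rel 'I_N) : {set {set 'I_N}} :=
  [set A : {set 'I_N} | [exists x, exists y, e x y && (A == [set x; y])]].

(* degree sequence sorted non-decreasingly: d_1 <= d_2 <= ... <= d_N
   (0-indexed: entry k is d_{k+1}) *)
Definition degseq N (e : rel 'I_N) : seq nat :=
  sort leq [seq deg e i | i <- enum 'I_N].

Definition laplacian (R : fieldType) N (e : rel 'I_N) : 'M[R]_N :=
  \matrix_(i, j) (if i == j then (deg e i)%:R else if e i j then -1 else 0).

(* Effective resistance between i and j with unit resistors on edges: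
   the potential difference w_i - w_j, where w solves the Kirchhoff
   equation w L = e_i - e_j (unit current in at i, out at j).
   pinvmx gives such a solution whenever one exists (always, for a
   connected graph); the difference w_i - w_j is then independent of
   the chosen solution. *)
Definition eff_res (R : fieldType) N (e : rel 'I_N) (i j : 'I_N) : R :=
  let b : 'rV[R]_N := delta_mx 0 i - delta_mx 0 j in
  let w := b *m pinvmx (laplacian R e) in
  w 0 i - w 0 j.

Definition add_deg_kirchhoff (R : fieldType) N (e : rel 'I_N) : R :=
  \sum_(i < N) \sum_(j < N | (i < j)%N) ((deg e i + deg e j)%:R * eff_res R e i j).

(* Main.v *)
Require Import Defs.
From HB Require Import structures.
From mathcomp Require Import all_boot all_order all_algebra.
From mathcomp Require Import ring lra zify.
Import Order.TTheory GRing.Theory Num.Theory.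
Local Open Scope ring_scope.
Set Implicit Arguments. Unset Strict Implicit. Unset Printing Implicit Defensive.

Lemma key_ar (R : realFieldType) (a b r E : R) : 0 < a -> a <= 1 -> 0 < b -> b <= 1 ->
  (E = 0 \/ E = 1) ->
  (a + b) ^+ 2 <= r * (a + b + 2 * a * b * E) ->
  (a + b) ^+ 2 - 2 * E * a * b <= (a + b) * r.
Proof.
move=> a0 a1 b0 b1 [->|->] h.
  have e1 : (a + b) ^+ 2 - 2 * 0 * a * b = (a + b) ^+ 2 by ring.
  have e2 : r * (a + b + 2 * a * b * 0) = (a + b) * r by ring.
  by rewrite e1; rewrite e2 in h.
have -> : (a + b) ^+ 2 - 2 * 1 * a * b = (a + b) ^+ 2 - 2 * (a * b) by ring.
have {}h : (a + b) ^+ 2 <= r * (a + b + 2 * (a * b)).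
  by have -> : a + b + 2 * (a * b) = a + b + 2 * a * b * 1 by ring.
move: h; set s := a + b; set p := a * b => h.
have hp : 0 < p by apply: mulr_gt0.
have hsp : s ^+ 2 <= s + 2 * p.
  rewrite /s /p; nra.
have hs : 0 < s by rewrite /s; lra.
have h1 : s ^+ 3 <= s * r * (s + 2 * p).
  have := ler_wpM2l (ltW hs) h.
  have -> : s * s ^+ 2 = s ^+ 3 by ring.
  have -> : s * (r * (s + 2 * p)) = s * r * (s + 2 * p) by ring.
  done.
rewrite leNgt; apply/negP => hn.
rewrite mulrC in hn.
have h2 : s * r * (s + 2 * p) < (s ^+ 2 - 2 * p) * (s + 2 * p).
  by rewrite ltr_pM2r //; lra.
have h3 : 0 <= p * (s + 2 * p - s ^+ 2) by apply: mulr_ge0; lra.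
have : (s ^+ 2 - 2 * p) * (s + 2 * p) = s ^+ 3 - 2 * (p * (s + 2 * p - s ^+ 2)) by ring.
lra.
Qed.

Lemma arith (R : realFieldType) (di dj r E : R) : 1 <= di -> 1 <= dj -> (E = 0 \/ E = 1) ->
  (di^-1 + dj^-1) ^+ 2 <= r * (di^-1 + dj^-1 + 2 * di^-1 * dj^-1 * E) ->
  (di + dj) * (di^-1 + dj^-1) - 2 * E <= (di + dj) * r.
Proof.
move=> hi hj hE h.
have di0 : 0 < di by lra.
have dj0 : 0 < dj by lra.
have ai : 0 < di^-1 by rewrite invr_gt0.
have aj : 0 < dj^-1 by rewrite invr_gt0.
have := @key_ar R di^-1 dj^-1 r E ai _ aj _ hE h.
rewrite !invf_le1 // => /(_ hi hj) k.
have hd : 0 <= di * dj by apply: mulr_ge0; lra.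
have := ler_wpM2l hd k.
have nzi : di != 0 by rewrite gt_eqF.
have nzj : dj != 0 by rewrite gt_eqF.
have -> : di * dj * ((di^-1 + dj^-1) ^+ 2 - 2 * E * di^-1 * dj^-1)
   = (di + dj) * (di^-1 + dj^-1) - 2 * E.
  by field; rewrite nzi nzj.
have -> : di * dj * ((di^-1 + dj^-1) * r) = (di + dj) * r.
  by field; rewrite nzi nzj.
done.
Qed.

Lemma lower_upper (R : nmodType) N (G : 'I_N -> 'I_N -> R) : (forall i j, G i j = G j i) ->
  \sum_(i < N) \sum_(j < N | (j < i)%N) G i j = \sum_(i < N) \sum_(j < N | (i < j)%N) G i j.
Proof.
move=> hG.
rewrite (eq_bigr (fun i : 'I_N => \sum_(j < N) (if (j < i)%N then G i j else 0))); last first.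
  by move=> i _; rewrite big_mkcond.
rewrite exchange_big /=; apply: eq_bigr => i _; rewrite [RHS]big_mkcond.
by apply: eq_bigr => j _; rewrite hG.
Qed.

Lemma sym_sum (R : nmodType) N (G : 'I_N -> 'I_N -> R) : (forall i j, G i j = G j i) ->
  \sum_i \sum_j G i j = \sum_i G i i + (\sum_(i < N) \sum_(j < N | (i < j)%N) G i j) *+ 2.
Proof.
move=> hG.
have h : forall i, \sum_j G i j = G i i + \sum_(j < N | (j < i)%N) G i j + \sum_(j < N | (i < j)%N) G i j.
  move=> i; rewrite (bigID (fun j : 'I_N => (i < j)%N)) /= addrC; congr (_ + _).
  rewrite (bigD1 i) ?ltnn //=; congr (_ + _); apply: eq_bigl => j.
  by rewrite -leqNgt ltn_neqAle andbC.
rewrite (eq_bigr _ (fun i _ => h i)) !big_split /= lower_upper // mulr2n addrA.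
done.
Qed.

Lemma count_enumT (T : finType) (a : pred T) : count a (enum T) = #|a|.
Proof. rewrite cardE /enum_mem size_filter count_filter. apply: eq_count => x. by rewrite /= andbT. Qed.

Section G.
Variables (R : realFieldType) (N : nat) (e : rel 'I_N).
Hypothesis hs : simple_graph e.

Definition dR (i : 'I_N) : R := (deg e i)%:R.
Local Notation L := (laplacian R e).

Lemma e_irr i : e i i = false.
Proof. by case: hs => h _; apply: h. Qed.
Lemma e_sym i j : e i j = e j i.
Proof. by case: hs => _ h; apply: h. Qed.

Lemma degE i : dR i = \sum_l (e i l)%:R.
Proof.
rewrite /dR /deg -sum1_card natr_sum big_mkcond /=; apply: eq_bigr => l _.
by rewrite inE; case: (e i l).
Qed.

Lemma lapE i j : L i j = (if i == j then dR i else 0) - (e i j)%:R.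
Proof.
rewrite mxE; case: eqP => [->|_]; first by rewrite e_irr subr0.
by case: (e i j); rewrite sub0r ?oppr0.
Qed.

Definition F (u v : 'rV[R]_N) : R := (u *m L *m v^T) 0 0.
Definition B (u v : 'rV[R]_N) : R :=
  \sum_k \sum_l (e k l)%:R * ((u 0 k - u 0 l) * (v 0 k - v 0 l)).

Lemma FE u v : F u v = \sum_k \sum_l u 0 k * L k l * v 0 l.
Proof.
rewrite /F mxE exchange_big /=; apply: eq_bigr => l _.
rewrite !mxE mulr_suml; apply: eq_bigr => k _; by rewrite !mxE.
Qed.

Lemma FE2 u v : F u v = \sum_k dR k * (u 0 k * v 0 k)
   - \sum_k \sum_l (e k l)%:R * (u 0 k * v 0 l).
Proof.
rewrite FE -sumrB; apply: eq_bigr => k _.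
rewrite (eq_bigr (fun l => u 0 k * (if k == l then dR k else 0) * v 0 l
    - (e k l)%:R * (u 0 k * v 0 l))); last first. move=> l _; rewrite lapE; set c := (if _ then _ else _); set E := ((e k l)%:R : R); ring.
rewrite sumrB; congr (_ - _).
rewrite (bigD1 k) //= eqxx big1 ?addr0; first by ring.
by move=> l /negbTE; rewrite eq_sym => ->; rewrite mulr0 mul0r.
Qed.

Lemma swap_sum (G : 'I_N -> 'I_N -> R) :
  \sum_k \sum_l (e k l)%:R * G k l = \sum_k \sum_l (e k l)%:R * G l k.
Proof.
rewrite exchange_big /=; apply: eq_bigr => k _; apply: eq_bigr => l _.
by rewrite e_sym.
Qed.

Lemma BF u v : B u v = 2 * F u v.
Proof.
rewrite FE2 /B.
have S1 : \sum_k \sum_l (e k l)%:R * (u 0 k * v 0 k) = \sum_k dR k * (u 0 k * v 0 k).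
  by apply: eq_bigr => k _; rewrite degE mulr_suml.
have S4 := swap_sum (fun k l => u 0 l * v 0 l).
have S3 := swap_sum (fun k l => u 0 l * v 0 k).
simpl in S4, S3.
transitivity (\sum_k \sum_l (e k l)%:R * (u 0 k * v 0 k) + \sum_k \sum_l (e k l)%:R * (u 0 l * v 0 l)
  - \sum_k \sum_l (e k l)%:R * (u 0 k * v 0 l) - \sum_k \sum_l (e k l)%:R * (u 0 l * v 0 k)).
  rewrite -big_split -!sumrB /=; apply: eq_bigr => k _.
  rewrite -big_split -!sumrB /=; apply: eq_bigr => l _; ring.
rewrite S4 S3 S1; ring.
Qed.

Lemma B_ge0 u : 0 <= B u u.
Proof.
apply: sumr_ge0 => k _; apply: sumr_ge0 => l _.
by apply: mulr_ge0; [exact: ler0n | rewrite -expr2 sqr_ge0].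
Qed.

Lemma F_ge0 u : 0 <= F u u.
Proof. have := B_ge0 u; rewrite BF; lra. Qed.

Lemma FC u v : F u v = F v u.
Proof.
have : B u v = B v u.
  by apply: eq_bigr => k _; apply: eq_bigr => l _; rewrite [_ * (v 0 k - _)]mulrC.
rewrite !BF; lra.
Qed.

Lemma FDl u v y : F (u + v) y = F u y + F v y.
Proof. by rewrite /F !mulmxDl mxE. Qed.

Lemma FZl a u y : F (a *: u) y = a * F u y.
Proof. by rewrite /F -!scalemxAl mxE. Qed.

Lemma FDr u v y : F y (u + v) = F y u + F y v.
Proof. by rewrite FC FDl !(FC y). Qed.

Lemma FZr a u y : F y (a *: u) = a * F y u.
Proof. by rewrite FC FZl (FC y). Qed.

Lemma CS w x : 0 < F x x -> F w x ^+ 2 <= F w w * F x x.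
Proof.
move=> hx.
have := F_ge0 (F x x *: w + (- F w x) *: x).
rewrite !(FDl, FZl, FDr, FZr) (FC x w).
set t := F x x; set c := F w x; set r := F w w => h.
have h2 : 0 <= t * (t * r - c ^+ 2) by rewrite expr2; nra.
rewrite pmulr_rge0 // subr_ge0 in h2; by rewrite mulrC.
Qed.

Lemma count1 M : (M <= N)%N ->
  (forall k : nat, (k < M)%N -> nth 0%N (degseq e) k = 1%N) ->
  (M <= #|[pred k | deg e k == 1%N]|)%N.
Proof.
move=> hMN h.
have hs1 : size (degseq e) = N by rewrite /degseq size_sort size_map size_enum_ord.
have -> : #|[pred k | deg e k == 1%N]| = count (pred1 1%N) (degseq e).
  rewrite /degseq.
  have /permP -> := permEl (perm_sort leq [seq deg e i | i <- enum 'I_N]).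
  by rewrite count_map count_enumT.
rewrite -(cat_take_drop M (degseq e)) count_cat.
have : all (pred1 1%N) (take M (degseq e)).
  apply/(all_nthP 0%N) => k; rewrite size_takel ?hs1 // => hk.
  by rewrite nth_take //= h.
rewrite all_count size_takel ?hs1 // => /eqP ->; exact: leq_addr.
Qed.

Definition Pset := [set p : 'I_N * 'I_N | (p.1 < p.2)%N && e p.1 p.2].

Lemma edgesE : edges e = [set [set p.1; p.2] | p in Pset].
Proof.
apply/setP => A; rewrite inE; apply/idP/imsetP.
  case/existsP => x /existsP [y /andP [exy /eqP ->]].
  have hxy : x != y by apply/eqP => h; rewrite h e_irr in exy.
  case: (ltngtP x y) => [lt|gt|eq].
  - by exists (x, y) => //; rewrite inE /= lt exy.
  - by exists (y, x); [rewrite inE /= gt e_sym exy | rewrite /= setUC].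
  - by move: hxy; rewrite (val_inj eq) eqxx.
case=> p; rewrite inE => /andP [_ hp] ->.
by apply/existsP; exists p.1; apply/existsP; exists p.2; rewrite hp eqxx.
Qed.

Lemma card_edges : #|edges e| = #|Pset|.
Proof.
rewrite edgesE card_in_imset // => [[p1 p2] [q1 q2]]; rewrite !inE /= => /andP [hp _] /andP [hq _] H.
have h1 : p1 \in [set q1; q2] by rewrite -H set21.
have h2 : p2 \in [set q1; q2] by rewrite -H set22.
have h3 : q1 \in [set p1; p2] by rewrite H set21.
have e1 : nat_of_ord p1 = q1 /\ nat_of_ord p2 = q2.
  move: h1 h2 h3; rewrite !inE -!val_eqE /= => /orP [] /eqP h1 /orP [] /eqP h2 /orP [] /eqP h3; lia.
by case: e1 => /val_inj -> /val_inj ->.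
Qed.

Lemma sum_upper_e : \sum_(i < N) \sum_(j < N | (i < j)%N) (e i j : nat) = #|edges e|.
Proof.
rewrite card_edges -sum1_card.
rewrite (eq_bigr (fun i : 'I_N => \sum_(j < N) (if (i < j)%N then (e i j : nat) else 0%N))); last first.
  by move=> i _; rewrite big_mkcond.
rewrite pair_big /= [RHS]big_mkcond /=.
apply: eq_bigr => p _; rewrite inE.
by case: (p.1 < p.2)%N; case: (e p.1 p.2).
Qed.

Lemma handshake : \sum_k dR k = 2 * (#|edges e|)%:R.
Proof.
under eq_bigr => k _ do rewrite degE.
rewrite sym_sum; last by move=> i j; rewrite e_sym.
rewrite big1 ?add0r; last by move=> i _; rewrite e_irr.
rewrite -sum_upper_e natr_sum mulr2n -mulr2n mulr_natl.
by congr (_ + _); apply: eq_bigr => i _; rewrite natr_sum.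
Qed.

Hypothesis hc : connected_graph e.

Lemma ker_const (u : 'rV[R]_N) : u *m L = 0 -> forall k l, u 0 k = u 0 l.
Proof.
move=> h0.
have hF : F u u = 0 by rewrite /F h0 mul0mx mxE.
have hB : B u u = 0 by rewrite BF hF mulr0.
have hin : forall k, 0 <= \sum_l (e k l)%:R * ((u 0 k - u 0 l) * (u 0 k - u 0 l)).
  move=> k; apply: sumr_ge0 => l _.
  by apply: mulr_ge0; [exact: ler0n | rewrite -expr2 sqr_ge0].
have hE : forall k l, e k l -> u 0 k = u 0 l.
  move=> k l hkl.
  have h1 : \sum_l (e k l)%:R * ((u 0 k - u 0 l) * (u 0 k - u 0 l)) = 0.
    exact: (psumr_eq0P (P := xpredT) (fun m _ => hin m) hB (i:=k) isT).
  have ht : forall l, 0 <= (e k l)%:R * ((u 0 k - u 0 l) * (u 0 k - u 0 l)) :> R.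
    by move=> m; apply: mulr_ge0; [exact: ler0n | rewrite -expr2 sqr_ge0].
  have := (psumr_eq0P (P := xpredT) (fun l _ => ht l) h1 (i:=l) isT).
  rewrite hkl mul1r => /eqP; rewrite mulf_eq0 orbb subr_eq0 => /eqP //.
move=> k l.
have hcl : closed e [pred m | u 0 m == u 0 k].
  by move=> x y exy; rewrite !inE (hE x y exy).
by have := closed_connect hcl (hc k l); rewrite !inE eqxx => /esym /eqP ->.
Qed.

Lemma deg_pos : (1 < N)%N -> forall k, (0 < deg e k)%N.
Proof.
move=> h2 k.
have h0 : (0 < N)%N by lia.
pose o0 : 'I_N := @Ordinal N 0 h0.
pose o1 : 'I_N := @Ordinal N 1 h2.
have [l hl] : exists l : 'I_N, l != k.
  case: (eqVneq k o0) => [->|hk]; last by exists o0; rewrite eq_sym.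
  by exists o1; rewrite -val_eqE.
have /connectP [p pth lst] := hc k l.
case: p pth lst => [_ /= hl'|y p /= /andP [hky _] _]; first by rewrite hl' eqxx in hl.
by rewrite /deg card_gt0; apply/set0Pn; exists y; rewrite inE.
Qed.

Lemma S_bound (M : nat) : (M < N)%N -> (forall k, (0 < deg e k)%N) ->
  (M <= #|[pred k | deg e k == 1%N]|)%N ->
  M%:R + (N%:R - M%:R) ^+ 2 / (\sum_k dR k - M%:R) <= \sum_k (dR k)^-1.
Proof.
move=> hMN hpos hcnt.
set D := \sum_k dR k; set S := \sum_k (dR k)^-1.
have dk1 : forall k, 1 <= dR k by move=> k; rewrite /dR ler1n hpos.
have hDN : N%:R <= D.
  have : \sum_(k < N) (1 : R) <= D by apply: ler_sum => k _; apply: dk1.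
  by rewrite sumr_const card_ord.
have hMNr : M%:R < N%:R :> R by rewrite ltr_nat.
have nz1 : N%:R - M%:R != 0 :> R by rewrite subr_eq0 gt_eqF.
have nz2 : D - M%:R != 0 by rewrite subr_eq0 gt_eqF //; lra.
set c := (D - M%:R) / (N%:R - M%:R).
have c0 : 0 < c by apply: divr_gt0; lra.
have cnz : c != 0 by rewrite gt_eqF.
have phi : forall d : R, 0 < d -> 0 <= d^-1 - 2 / c + d / c ^+ 2.
  move=> d d0.
  have dnz : d != 0 by rewrite gt_eqF.
  have -> : d^-1 - 2 / c + d / c ^+ 2 = (d - c) ^+ 2 / (d * c ^+ 2).
    by field; rewrite dnz cnz.
  by apply: divr_ge0; [exact: sqr_ge0 | apply: mulr_ge0; [lra | exact: sqr_ge0]].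
have sum_phi : \sum_k ((dR k)^-1 - 2 / c + dR k / c ^+ 2) = S - N%:R * (2 / c) + D / c ^+ 2.
  rewrite big_split sumrB /= sumr_const card_ord -mulr_suml [N%:R * _]mulr_natl //.
have phi1 : 0 <= 1 - 2 / c + 1 / c ^+ 2 by have := phi 1 ltr01; rewrite invr1.
have low : M%:R * (1 - 2 / c + 1 / c ^+ 2) <= \sum_k ((dR k)^-1 - 2 / c + dR k / c ^+ 2).
  rewrite (bigID (fun k => deg e k == 1%N)) /=.
  have h2 : 0 <= \sum_(k | deg e k != 1%N) ((dR k)^-1 - 2 / c + dR k / c ^+ 2).
    by apply: sumr_ge0 => k _; apply: phi; have := dk1 k; lra.
  have h1 : \sum_(k | deg e k == 1%N) ((dR k)^-1 - 2 / c + dR k / c ^+ 2)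
      = #|[pred k | deg e k == 1%N]|%:R * (1 - 2 / c + 1 / c ^+ 2).
    rewrite (eq_bigr (fun _ => 1 - 2 / c + 1 / c ^+ 2)); last first.
      by move=> k /eqP hk; rewrite /dR hk invr1.
    rewrite sumr_const [RHS]mulr_natl; congr (_ *+ _); by apply: eq_card.
  have h3 : M%:R * (1 - 2 / c + 1 / c ^+ 2) <= #|[pred k | deg e k == 1%N]|%:R * (1 - 2 / c + 1 / c ^+ 2).
    by apply: ler_wpM2r => //; rewrite ler_nat.
  lra.
have ident : N%:R * (2 / c) - D / c ^+ 2 + M%:R * (1 - 2 / c + 1 / c ^+ 2)
   = M%:R + (N%:R - M%:R) ^+ 2 / (D - M%:R).
  by rewrite /c; field; rewrite nz1 nz2.
rewrite -ident; lra.
Qed.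

Hypothesis hN : (0 < N)%N.
Let i0 : 'I_N := @Ordinal N 0 hN.
Let one : 'rV[R]_N := const_mx 1.

Lemma one_neq0 : one != 0.
Proof. by apply/eqP => /rowP /(_ i0); rewrite !mxE; apply/eqP; rewrite oner_eq0. Qed.

Lemma ker_sub : (kermx L <= one)%MS.
Proof.
apply/row_subP => r; set v := row r (kermx L).
have hv : v *m L = 0 by rewrite -row_mul mulmx_ker row0.
apply/sub_rVP; exists (v 0 i0); apply/rowP => k; rewrite [RHS]mxE [X in _ * X]mxE mulr1; exact: ker_const hv _ _.
Qed.

Lemma rankL : (N.-1 <= \rank L)%N.
Proof.
have := mxrankS ker_sub; rewrite mxrank_ker rank_rV one_neq0 /=; lia.
Qed.

Let V := kermx (one^T).

Lemma rankV : \rank V = N.-1.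
Proof. by rewrite /V mxrank_ker mxrank_tr rank_rV one_neq0 subn1. Qed.

Lemma LV : (L <= V)%MS.
Proof.
apply/sub_kermxP; apply/matrixP => k c; rewrite /one !mxE.
under eq_bigr => l _ do rewrite lapE !mxE mulr1.
rewrite sumrB (bigD1 k) //= eqxx big1 ?addr0 -?degE ?subrr //.
by move=> l /negbTE; rewrite eq_sym => ->.
Qed.

Lemma bV i j : (('e_i - 'e_j : 'rV[R]_N) <= V)%MS.
Proof.
apply/sub_kermxP; rewrite mulmxBl -!rowE; apply/matrixP => a c; rewrite !mxE subrr //.
Qed.

Lemma bL i j : (('e_i - 'e_j : 'rV[R]_N) <= L)%MS.
Proof.
apply: submx_trans (bV i j) _.
have := mxrank_leqif_sup LV; move/geq_leqif => <-.
by rewrite rankV rankL.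
Qed.

Lemma FbE w v i j : w *m L = 'e_i - 'e_j -> F w v = v 0 i - v 0 j.
Proof. by move=> h; rewrite /F h mulmxBl -!rowE !mxE. Qed.

Lemma effE i j : eff_res R e i j =
  F (('e_i - 'e_j) *m pinvmx L) (('e_i - 'e_j) *m pinvmx L).
Proof. by rewrite /eff_res /=; symmetry; apply: FbE; apply: mulmxKpV; apply: bL. Qed.

Lemma effB i j v : F (('e_i - 'e_j) *m pinvmx L) v = v 0 i - v 0 j.
Proof. by apply: FbE; apply: mulmxKpV; apply: bL. Qed.

Lemma Fd p q : F 'e_p 'e_q = L p q.
Proof. by rewrite /F trmx_delta -rowE -colE !mxE. Qed.

Lemma pair_bound i j : i != j -> (0 < deg e i)%N -> (0 < deg e j)%N ->
  (dR i + dR j) * ((dR i)^-1 + (dR j)^-1) - 2 * (e i j)%:R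
    <= (dR i + dR j) * eff_res R e i j.
Proof.
move=> hij hi hj.
have di1 : 1 <= dR i by rewrite /dR ler1n.
have dj1 : 1 <= dR j by rewrite /dR ler1n.
set a := (dR i)^-1; set b := (dR j)^-1.
set x : 'rV[R]_N := a *: 'e_i + (- b) *: 'e_j.
have nzi : dR i != 0 by rewrite gt_eqF //; lra.
have nzj : dR j != 0 by rewrite gt_eqF //; lra.
have Fxx : F x x = a + b + 2 * a * b * (e i j)%:R.
  rewrite /x !(FDl, FZl, FDr, FZr) !Fd !lapE eqxx (negbTE hij) eq_sym (negbTE hij) (e_sym j i) !e_irr !eqxx.
  set E := ((e i j)%:R : R); rewrite /a /b /= !subr0; field; by rewrite nzi nzj.
have Fwx : F (('e_i - 'e_j) *m pinvmx L) x = a + b.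
  rewrite effB /x !mxE eqxx (negbTE hij) eq_sym (negbTE hij) !eqxx /=; ring.
have hE : (e i j)%:R = 0 :> R \/ (e i j)%:R = 1 :> R by case: (e i j); [right|left].
have a0 : 0 < a by rewrite invr_gt0; lra.
have b0 : 0 < b by rewrite invr_gt0; lra.
have hpos : 0 < F x x.
  rewrite Fxx; have : 0 <= 2 * a * b * (e i j)%:R.
    by apply: mulr_ge0; [apply: mulr_ge0; [apply: mulr_ge0|]; lra | exact: ler0n].
  lra.
have := CS (('e_i - 'e_j) *m pinvmx L) hpos.
rewrite Fwx Fxx -effE => h.
by apply: arith.
Qed.

Lemma sum2_lin (G1 G2 G3 G4 : 'I_N -> 'I_N -> R) :
  \sum_i \sum_j (G1 i j + (G2 i j + G3 i j) - G4 i j) =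
  \sum_i \sum_j G1 i j + (\sum_i \sum_j G2 i j + \sum_i \sum_j G3 i j) - \sum_i \sum_j G4 i j.
Proof.
rewrite -[in RHS]big_split -[in RHS]big_split -[in RHS]sumrB; apply: eq_bigr => i _ /=.
by rewrite -big_split -big_split -sumrB.
Qed.

End G.

Lemma key_id (R : realFieldType) (a b E : R) : a != 0 -> b != 0 ->
  (a + b) * (a^-1 + b^-1) - 2 * E = 2 + (a * b^-1 + b * a^-1) - 2 * E.
Proof. by move=> ha hb; field; rewrite ha hb. Qed.

Lemma key_id2 (R : realFieldType) (a : R) : a != 0 ->
  (a + a) * (a^-1 + a^-1) - 2 * 0 = 4.
Proof. by move=> ha; field; rewrite ha. Qed.

Theorem corollary3 (R : realFieldType) (N M : nat) (e : rel 'I_N) :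
  simple_graph e -> connected_graph e ->
  (M < N)%N ->
  (forall k : nat, (k < M)%N -> nth 0%N (degseq e) k = 1%N) ->
  let nE : R := (#|edges e|)%:R in
  add_deg_kirchhoff R e >=
    (N%:R * (N%:R - 2)) + 2 * nE * (M%:R + (N%:R - M%:R) ^+ 2 / (2 * nE - M%:R))
    - 2 * nE.
Proof.
move=> hs hc hMN hdeg; cbv zeta.
set nE : R := (#|edges e|)%:R.
case: (leqP N 1) => hN1.
  have hY : add_deg_kirchhoff R e = 0.
    rewrite /add_deg_kirchhoff big1 // => i _; rewrite big_pred0 // => j.
    apply/negbTE; rewrite -leqNgt.
    have hi := ltn_ord i; have hj := ltn_ord j; lia.
  have hE : #|edges e| = 0%N.
    apply/eqP; rewrite cards_eq0; apply/eqP/setP => A; rewrite in_set0.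
    apply/negP; rewrite /edges inE; case/existsP => x /existsP [y /andP [h _]].
    have hxy : x = y by apply/val_inj => /=; have := ltn_ord x; have := ltn_ord y; lia.
    by rewrite hxy (e_irr hs) in h.
  have hM : M = 0%N by lia.
  rewrite hY /nE hE hM.
  have hN' : N = 1%N by lia.
  rewrite hN' /=.
  set q := (_ / _).
  have -> : (1%:R : R) * (1%:R - 2) + 2 * 0%:R * (0%:R + q) - 2 * 0%:R = -1.
    ring.
  by rewrite lerN10.
have hN : (0 < N)%N by lia.
have hpos := deg_pos hc hN1.
set D := \sum_k dR R e k.
set S := \sum_k (dR R e k)^-1.
have hD : D = 2 * nE by rewrite /D handshake.
have hb := S_bound R hMN hpos (count1 (ltnW hMN) hdeg).
rewrite -/D -/S in hb.
have nz : forall k, dR R e k != 0 by move=> k; rewrite /dR pnatr_eq0 -lt0n hpos.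
set H := fun i j => (dR R e i + dR R e j) * ((dR R e i)^-1 + (dR R e j)^-1) - 2 * (e i j)%:R.
have step1 : \sum_(i < N) \sum_(j < N | (i < j)%N) H i j <= add_deg_kirchhoff R e.
  rewrite /add_deg_kirchhoff; apply: ler_sum => i _; apply: ler_sum => j hij.
  rewrite natrD; apply: pair_bound => //.
  by rewrite -val_eqE /= neq_ltn hij.
have hHs : forall i j, H i j = H j i.
  by move=> i j; rewrite /H (e_sym hs i j) [dR R e j + _]addrC [(dR R e j)^-1 + _]addrC.
have hsym := sym_sum hHs.
have hsum : \sum_i \sum_j H i j = 2 * N%:R ^+ 2 + 2 * (D * S) - 2 * D.
  transitivity (\sum_(i < N) \sum_(j < N) ((2:R) + (dR R e i * (dR R e j)^-1 + dR R e j * (dR R e i)^-1)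
      - 2 * (e i j)%:R)).
    apply: eq_bigr => i _; apply: eq_bigr => j _; rewrite /H.
    by rewrite key_id.
  rewrite sum2_lin.
  have A1 : \sum_(i < N) \sum_(j < N) (2:R) = 2 * N%:R ^+ 2.
    by rewrite !sumr_const !card_ord -mulrnA -(mulr_natr (2:R) (N * N)) natrM expr2.
  have A2 : \sum_(i < N) \sum_(j < N) dR R e i * (dR R e j)^-1 = D * S.
    by rewrite /D /S mulr_suml; apply: eq_bigr => i _; rewrite mulr_sumr.
  have A3 : \sum_(i < N) \sum_(j < N) dR R e j * (dR R e i)^-1 = D * S.
    by rewrite exchange_big /= A2.
  have A4 : \sum_(i < N) \sum_(j < N) 2 * (e i j)%:R = 2 * D :> R.
    by rewrite /D mulr_sumr; apply: eq_bigr => i _; rewrite degE mulr_sumr.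
  rewrite A1 A2 A3 A4.
  lra.
have hdiag : \sum_i H i i = 4 * N%:R.
  rewrite (eq_bigr (fun _ => 4)); last first.
    by move=> i _; rewrite /H e_irr // key_id2.
  by rewrite sumr_const card_ord -(mulr_natr (4:R) N).
rewrite hsym hdiag mulr2n in hsum.
have hD0 : 0 <= D by rewrite hD; apply: mulr_ge0; [lra | exact: ler0n].
have hDb := ler_wpM2l hD0 hb.
rewrite hD in hDb hsum.
move: step1 hsum hDb.
set X := \sum_(i < N) \sum_(j < N | (i < j)%N) H i j.
set Y := add_deg_kirchhoff R e.
set B0 := M%:R + (N%:R - M%:R) ^+ 2 / (2 * nE - M%:R).
clearbody X Y B0 S nE.
move=> h1 h2 h3.
nra.
Qed.
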